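(* Let $m\ge 2$, let $D_m=\langle r,s\mid r^m=e,\ s^2=e,\ srs=r^{-1}\rangle$, let $\mathcal I=\{sr^k: 0\le k<m\}$ be its set of reflections, and let $H$ be an abelian group. (I) If $m$ is odd, then $D_m=\langle\mathcal I\rangle$ and for every $a,b\in\mathcal I$ there exists $t\in D_m$ with $t^2=ab$; consequently $S_1(D_m,H)=S_{1,2}(D_m,H)=\mathrm{Hom}(D_m,H)$. (II) If $m$ is even, this square-root property may fail: for example, in $D_4$ the product $s\cdot(sr)=r$ of two reflections is not a square in $D_4$.
   Context: $H$ is written additively. For a group $G$ with identity $e$, $S_1(G,H)$ is the set of $f:G\to H$ with $f(e)=0$ and $f(xy)+f(xy^{-1})=2f(x)$ for all $x,y\in G$; $S_{1,2}(G,H)$ is the subset of those also satisfying $f(xy)+f(x^{-1}y)=2f(y)$ for all $x,y\in G$. *)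

(* Defs.v *)
From HB Require Import structures.
From mathcomp Require Import all_boot all_order all_algebra all_fingroup.
Set Implicit Arguments. Unset Strict Implicit. Unset Printing Implicit Defensive.
Import GRing.Theory.

(* We realize it inside an arbitrary finite group gT as the
   subgroup generated by r and s, where r, s satisfy the defining relations
   and the generated subgroup has order 2m (so it is isomorphic to the
   presented group, which has order 2m). *)
Definition dihedral_pres (m : nat) (gT : finGroupType) (r s : gT) : Prop :=
  [/\ (r ^+ m = 1)%g, (s ^+ 2 = 1)%g, (s * r * s = r^-1)%g
    & #|<<[set r; s]>>%g| = m.*2].

Definition Dih (gT : finGroupType) (r s : gT) : {group gT} :=
  <<[set r; s]>>%G.

Definition reflections (m : nat) (gT : finGroupType) (r s : gT) : {set gT} :=
  [set (s * r ^+ k)%g | k : 'I_m].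

Definition S_1 (gT : finGroupType) (G : {set gT}) (H : zmodType) (f : gT -> H)
  : Prop :=
  f 1%g = 0%R /\
  (forall x y, x \in G -> y \in G ->
     (f (x * y)%g + f (x * y^-1)%g = f x *+ 2)%R).

Definition S_12 (gT : finGroupType) (G : {set gT}) (H : zmodType) (f : gT -> H)
  : Prop :=
  S_1 G f /\
  (forall x y, x \in G -> y \in G ->
     (f (x * y)%g + f (x^-1 * y)%g = f y *+ 2)%R).

Definition HomGrp (gT : finGroupType) (G : {set gT}) (H : zmodType) (f : gT -> H)
  : Prop :=
  forall x y, x \in G -> y \in G -> f (x * y)%g = (f x + f y)%R.

(* Main.v *)
From mathcomp Require Import all_boot all_order all_algebra all_fingroup all_solvable.
Require Import Defs.
From mathcomp Require Import zify.
Set Implicit Arguments. Unset Strict Implicit. Unset Printing Implicit Defensive.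
Import GRing.Theory.
Local Open Scope group_scope.

Lemma sinvE (gT : finGroupType) (s : gT) : s ^+ 2 = 1 -> s^-1 = s.
Proof. by move=> h; apply/eqP; rewrite eq_invg_mul -expg2 h. Qed.

Lemma conj_cyc (gT : finGroupType) (r s : gT) :
  s ^+ 2 = 1 -> s * r * s = r^-1 -> forall u, u \in <[r]> -> s * u * s = u^-1.
Proof.
move=> hs hr u /cycleP[i ->].
have := conjXg r s i; rewrite !conjgE sinvE // !mulgA hr => ->.
by rewrite expgVn.
Qed.

Lemma Dih_decomp (gT : finGroupType) (r s : gT) :
  s ^+ 2 = 1 -> s * r * s = r^-1 -> forall x, x \in Dih r s ->
  exists2 u, u \in <[r]> & (x = u \/ x = u * s).
Proof.
move=> hs hr x.
have sN : <[s]> \subset 'N(<[r]>).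
  rewrite cycle_subG; apply/normP; rewrite -cycleJ conjgE sinvE // mulgA hr.
  by rewrite cycleV.
have -> : Dih r s = <[r]> * <[s]> :> {set gT}.
  have := norm_joinEr sN; rewrite /= => <-; rewrite /Dih /= joing_idl joing_idr /joing /=.
  by [].
case/mulsgP=> u v hu /cycleP[i ->] ->; exists u => //.
rewrite -(expg_mod _ hs).
have : i %% 2 < 2 by rewrite ltn_mod.
case: (i %% 2) => [|[|//]] _; [left; by rewrite mulg1 | right; by rewrite expg1].
Qed.

Lemma sqrt_cyc (gT : finGroupType) (r : gT) (m : nat) :
  odd m -> r ^+ m = 1 -> forall u, u \in <[r]> ->
  exists2 w, w \in <[r]> & u = w * w.
Proof.
move=> hm hr u hu; exists (u ^+ (m.+1)./2); first exact: groupX.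
have um : u ^+ m = 1.
  by case/cycleP: hu => i ->; rewrite -expgM mulnC expgM hr expg1n.
have e : (m.+1)./2.*2 = m.+1.
  by have := odd_double_half m.+1; rewrite /= hm.
by rewrite -expgD addnn e expgS um mulg1.
Qed.

Lemma sv_comm (gT : finGroupType) (r s : gT) :
  s ^+ 2 = 1 -> s * r * s = r^-1 -> forall v, v \in <[r]> -> s * v = v^-1 * s.
Proof.
move=> hs hr v hv; rewrite -{1}(mulgK s (s * v)) sinvE //.
by rewrite (conj_cyc hs hr hv).
Qed.

Lemma S1_hom (gT : finGroupType) (r s : gT) (m : nat) (H : zmodType) (f : gT -> H) :
  odd m -> r ^+ m = 1 -> s ^+ 2 = 1 -> s * r * s = r^-1 ->
  S_1 (Dih r s) f -> HomGrp (Dih r s) f.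
Proof.
move=> hm hrm hs hr [f1 hf].
have DK : forall u, u \in <[r]> -> u \in Dih r s.
  by apply/subsetP; rewrite cycle_subG mem_gen // !inE eqxx.
have Ds : s \in Dih r s by rewrite mem_gen // !inE eqxx orbT.
have fsq : forall x, x \in Dih r s -> f (x * x) = (f x *+ 2)%R.
  by move=> x hx; rewrite -(hf x x) // mulgV f1 addr0.
have us1 : forall u, u \in <[r]> -> (u * s) * (u * s) = 1.
  move=> u hu; rewrite mulgA -(mulgA u s u) -mulgA (conj_cyc hs hr hu).
  by rewrite mulgV.
have f2r : forall u, u \in <[r]> -> (f (u * s)%g *+ 2 = 0)%R.
  by move=> u hu; rewrite -fsq ?groupM ?Ds ?DK // (us1 u hu).
have f2K : forall u, u \in <[r]> -> (f u *+ 2 = 0)%R.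
  move=> u hu; rewrite -(hf u s) ?Ds ?DK // sinvE // -mulr2n; exact: f2r.
have fK : forall u, u \in <[r]> -> f u = 0%R.
  move=> u hu; have [w hw ->] := sqrt_cyc hm hrm hu.
  by rewrite fsq ?Ds ?DK // f2K.
have fs2 : (f s *+ 2 = 0)%R by have := f2r 1 (group1 _); rewrite mul1g.
have fref : forall u, u \in <[r]> -> f (u * s) = f s.
  move=> u hu; have [w hw ->] := sqrt_cyc hm hrm hu.
  have hw' : w^-1 \in <[r]> by rewrite groupV.
  have := hf (w * s) w^-1; rewrite ?groupM ?groupV ?Ds ?DK // f2r //.
  rewrite -mulgA (sv_comm hs hr hw') invgK mulgA.
  rewrite -[w * s * w]mulgA (sv_comm hs hr hw) mulgA mulgV mul1g => /(_ isT isT) h.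
  have -> : f (w * w * s) = (- f s)%R by apply/eqP; rewrite -addr_eq0 h.
  by apply/eqP; rewrite eq_sym -addr_eq0 -mulr2n fs2.
move=> x y /(Dih_decomp hs hr)[u hu [->|->]] /(Dih_decomp hs hr)[v hv [->|->]].
- by rewrite !fK ?groupM // addr0.
- by rewrite mulgA !fref ?groupM // (fK u hu) add0r.
- rewrite -mulgA (sv_comm hs hr hv) mulgA !fref ?groupM ?groupV //.
  by rewrite (fK v hv) addr0.
- rewrite mulgA -(mulgA u s v) -mulgA (conj_cyc hs hr hv) fK ?groupM ?groupV //.
  by rewrite !fref // -mulr2n fs2.
Qed.

Lemma hom_S12 (gT : finGroupType) (G : {group gT}) (H : zmodType) (f : gT -> H) :
  HomGrp G f -> S_12 G f.
Proof.
move=> hf.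
have f1 : f 1 = 0%R by apply: (addrI (f 1)); rewrite addr0 -hf ?mulg1.
have fV : forall y, y \in G -> f y^-1 = (- f y)%R.
  by move=> y hy; apply: (addrI (f y)); rewrite -hf ?groupV // mulgV f1 subrr.
split; first split=> //.
  move=> x y hx hy; rewrite !hf ?groupV // fV // addrACA subrr addr0.
  by rewrite mulr2n.
move=> x y hx hy; rewrite !hf ?groupV // fV // addrACA subrr add0r.
by rewrite mulr2n.
Qed.

Lemma Dih_mul (gT : finGroupType) (r s : gT) :
  s ^+ 2 = 1 -> s * r * s = r^-1 -> Dih r s = <[r]> * <[s]> :> {set gT}.
Proof.
move=> hs hr.
have sN : <[s]> \subset 'N(<[r]>).
  rewrite cycle_subG; apply/normP; rewrite -cycleJ conjgE sinvE // mulgA hr.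
  by rewrite cycleV.
by have := norm_joinEr sN; rewrite /= => <-; rewrite /Dih /= joing_idl joing_idr /joing /=.
Qed.

Lemma D4_nosq (gT : finGroupType) (r s : gT) :
  dihedral_pres 4 r s -> ~ exists2 t, t \in Dih r s & t ^+ 2 = r.
Proof.
case=> hr4 hs hr hc [t ht ht2].
have ord4 : #[r] = 4.
  have := mul_cardG <[r]>%G <[s]>%G.
  rewrite /= -(Dih_mul hs hr) hc.
  have a1 : #[r] <= 4 by apply: dvdn_leq => //; rewrite order_dvdn hr4.
  have a2 : #[s] <= 2 by apply: dvdn_leq => //; rewrite order_dvdn hs.
  have a3 := cardG_gt0 (<[r]> :&: <[s]>)%G.
  rewrite /order in a1 a2 *; move: a3 => /=.
  rewrite (_ : 4.*2 = 8) //; move: a1 a2; move: #|<[r]>| #|<[s]>| #|_ :&: _| => A B C.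
 move=> *; nia.
case: (Dih_decomp hs hr ht) => u /cycleP[i ->] [eu|eu]; subst t.
  move: ht2; rewrite -expgM -{2}(expg1 r) => /eqP; rewrite eq_expg_mod_order ord4.
  move/eqP; lia.
move: ht2; rewrite expgS expg1 mulgA -(mulgA _ s) -mulgA.
rewrite (conj_cyc hs hr (mem_cycle r i)) mulgV => /esym/eqP.
by rewrite -order_eq1 ord4.
Qed.

Lemma in_refl (gT : finGroupType) (m : nat) (r s : gT) k : k < m ->
  s * r ^+ k \in reflections m r s.
Proof. by move=> hk; apply/imsetP; exists (Ordinal hk). Qed.

Theorem mainTheorem8 :
  (* (I) m odd *)
  (forall (m : nat) (gT : finGroupType) (r s : gT),
     2 <= m -> odd m -> dihedral_pres m r s ->
     [/\ Dih r s = <<reflections m r s>>%G,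
         (forall a b, a \in reflections m r s -> b \in reflections m r s ->
            exists2 t, t \in Dih r s & (t ^+ 2 = a * b)%g)
       & forall (H : zmodType) (f : gT -> H),
           (S_1 (Dih r s) f <-> HomGrp (Dih r s) f) /\
           (S_12 (Dih r s) f <-> HomGrp (Dih r s) f)]) /\
  (* (II) the example in D_4 *)
  (forall (gT : finGroupType) (r s : gT),
     dihedral_pres 4 r s ->
     [/\ s \in reflections 4 r s, (s * r)%g \in reflections 4 r s,
         (s * (s * r))%g = r
       & ~ exists2 t, t \in Dih r s & (t ^+ 2)%g = r]).
Proof.
split.
  move=> m gT r s hm2 hodd [hrm hs hr _].
  have Dr : r \in Dih r s by rewrite mem_gen // !inE eqxx.
  have Ds : s \in Dih r s by rewrite mem_gen // !inE eqxx orbT.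
  have reflD : forall a, a \in reflections m r s -> a \in Dih r s.
    by move=> a /imsetP[k _ ->]; rewrite groupM ?groupX.
  have m0 : 0 < m by lia.
  have m1 : 1 < m by lia.
  have sI : s \in reflections m r s.
    have e : s * r ^+ 0 = s by rewrite expg0 mulg1.
    by rewrite -{1}e in_refl.
  have srI : s * r \in reflections m r s.
    by rewrite -{1}(expg1 r) in_refl.
  split.
  - apply: val_inj => /=; apply/eqP; rewrite eqEsubset; apply/andP; split.
      rewrite gen_subG; apply/subsetP => x; rewrite !inE => /orP[]/eqP->.
        have e : s * (s * r ^+ 1) = r by rewrite expg1 mulgA -expg2 hs mul1g.
        rewrite -{1}e.
        by rewrite groupM // mem_gen // expg1.
      by rewrite mem_gen.
    by rewrite gen_subG; apply/subsetP => x /reflD.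
  - move=> a b ha hb.
    have hab : a * b \in <[r]>.
      case/imsetP: ha => i _ ->; case/imsetP: hb => j _ ->.
      rewrite mulgA (conj_cyc hs hr (mem_cycle r i)).
      by rewrite groupM ?groupV ?mem_cycle.
    have [w hw ->] := sqrt_cyc hodd hrm hab.
    exists w; last by rewrite expg2.
    by apply: (subsetP _ _ hw); rewrite cycle_subG.
  - move=> H f.
    have h1 := S1_hom hodd hrm hs hr (f := f).
    have h2 := hom_S12 (G := Dih r s) (f := f).
    by split; split=> [h|h]; [apply: h1 | case: (h2 h) | apply: h1; case: h | apply: h2].
move=> gT r s hp; have [hr4 hs hr _] := hp.
split.
- have e : s * r ^+ 0 = s by rewrite expg0 mulg1.
  by rewrite -{1}e in_refl.
- by rewrite -{1}(expg1 r) in_refl.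
- by rewrite mulgA -expg2 hs mul1g.
- exact: D4_nosq.
Qed.
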